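(* Consider the asynchronous dynamic game described in the context, with fixed $A\in\mathbb{R}^{n\times n}$, $B\in\mathbb{R}^{n\times k}$, and let $l=2j+1$ be an odd epoch. The game is in lock mode from epoch $l$ on, i.e. there exists $\gamma$ with $\Phi_i=\gamma$ for all $i\ge l$, if and only if the matrix $C_l$ chosen by the attacker in epoch $l$ satisfies $\dim\mathcal{V}^*(C_l)=\min_{C\in\mathbb{R}^{m\times n}}\dim\operatorname{Ker}\Omega(C,F_{l-1})$.
   Context: For $C\in\mathbb{R}^{m\times n}$, $F\in\mathbb{R}^{k\times n}$ let $\Omega(C,F)=[C;\,C(A+BF);\,\dots;\,C(A+BF)^{n-1}]$ (observability matrix of $\dot x=(A+BF)x$, $y=Cx$). A subspace $\mathcal{V}$ is $(A,B)$-invariant if $(A+BF)\mathcal{V}\subseteq\mathcal{V}$ for some $F$ (a friend of $\mathcal{V}$); $\mathcal{V}^*(C)$ is the maximal $(A,B)$-invariant subspace in $\operatorname{Ker}C$, and $\mathcal{F}(\mathcal{V}^*(C))$ its set of friends. Best responses: $BR1_a(F)=\arg\min_{C}\dim\operatorname{Ker}\Omega(C,F)$; $BR1_d(C)=\arg\max_{F}\dim\operatorname{Ker}\Omega(C,F)$ ($=\mathcal{F}(\mathcal{V}^*(C))$); $BR2_a(F)=\arg\min_{C\in BR1_a(F)}\dim\mathcal{V}^*(C)$; $BR2_d(C)=\arg\max_{F\in BR1_d(C)}\min_{C'\in\mathbb{R}^{m\times n}}\dim\operatorname{Ker}\Omega(C',F)$. The game: an initial $F_0$ is given; in each odd epoch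 $i$ the attacker chooses $C_i\in BR2_a(F_{i-1})$ (keeping $C_i=C_{i-2}$ whenever $C_{i-2}\in BR2_a(F_{i-1})$), $F_i=F_{i-1}$, and the value is $\Phi_i=\min_{C}\dim\operatorname{Ker}\Omega(C,F_{i-1})$; in each even epoch $i$ the defender chooses $F_i\in BR2_d(C_{i-1})$ (keeping $F_i=F_{i-2}$ whenever $F_{i-2}\in BR2_d(C_{i-1})$), $C_i=C_{i-1}$, and the value is $\Phi_i=\max_{F}\dim\operatorname{Ker}\Omega(C_{i-1},F)$. *)

(* Defs.v *)
From HB Require Import structures.
From mathcomp Require Import all_boot all_order all_algebra.
From mathcomp Require Import boolp classical_sets reals.
Set Implicit Arguments. Unset Strict Implicit. Unset Printing Implicit Defensive.
Import Order.TTheory GRing.Theory Num.Theory.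
Local Open Scope ring_scope.

(* Conventions: vectors x in R^n are column vectors; a subspace V of R^n is
   encoded by a square matrix V : 'M_n whose ROW space is {x^T | x in V}.
   Hence dim V = \rank V, and M V <= V  <=>  (V *m M^T <= V)%MS. *)

Section Game.
Variables (R : realType) (n m k : nat) (A : 'M[R]_n) (B : 'M[R]_(n, k)).

Definition Acl (F : 'M[R]_(k, n)) : 'M[R]_n := A + B *m F.

Definition Omega (C : 'M[R]_(m, n)) (F : 'M[R]_(k, n))
  : 'M[R]_(\sum_(i < n) m, n) :=
  \mxcol_(i < n) (C *m (Acl F) ^+ i).

Definition Ker p (M : 'M[R]_(p, n)) : 'M[R]_n := kermx M^T.

Definition kerOmega (C : 'M[R]_(m, n)) (F : 'M[R]_(k, n)) : nat :=
  \rank (Ker (Omega C F)).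

Definition invariant_under (M : 'M[R]_n) (V : 'M[R]_n) : bool :=
  (V *m M^T <= V)%MS.

Definition friend (V : 'M[R]_n) (F : 'M[R]_(k, n)) : bool :=
  invariant_under (Acl F) V.

Definition ABinvariant (V : 'M[R]_n) : Prop := exists F, friend V F.

Definition is_Vstar (C : 'M[R]_(m, n)) (V : 'M[R]_n) : Prop :=
  [/\ (V <= Ker C)%MS, ABinvariant V &
      forall W : 'M[R]_n, (W <= Ker C)%MS -> ABinvariant W -> (W <= V)%MS].

Definition Vstar (C : 'M[R]_(m, n)) : 'M[R]_n := xget 0 (is_Vstar C).

Definition dimVstar (C : 'M[R]_(m, n)) : nat := \rank (Vstar C).

Lemma minKer_ex (F : 'M[R]_(k, n)) :
  exists d, `[< exists C : 'M[R]_(m, n), kerOmega C F = d >].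
Proof. by exists (kerOmega 0 F); apply/asboolP; exists 0. Qed.

Definition minKer (F : 'M[R]_(k, n)) : nat := ex_minn (@minKer_ex F).

Lemma maxKer_ex (C : 'M[R]_(m, n)) :
  exists d, `[< exists F : 'M[R]_(k, n), kerOmega C F = d >].
Proof. by exists (kerOmega C 0); apply/asboolP; exists 0. Qed.

Lemma maxKer_ub (C : 'M[R]_(m, n)) :
  forall d, `[< exists F : 'M[R]_(k, n), kerOmega C F = d >] -> (d <= n)%N.
Proof. by move=> d /asboolP [F <-]; exact: rank_leq_col. Qed.

Definition maxKer (C : 'M[R]_(m, n)) : nat := @ex_maxn _ n (@maxKer_ex C) (@maxKer_ub C).

Definition BR1a (F : 'M[R]_(k, n)) (C : 'M[R]_(m, n)) : Prop :=
  forall C', (kerOmega C F <= kerOmega C' F)%N.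
Definition BR1d (C : 'M[R]_(m, n)) (F : 'M[R]_(k, n)) : Prop :=
  forall F', (kerOmega C F' <= kerOmega C F)%N.
Definition BR2a (F : 'M[R]_(k, n)) (C : 'M[R]_(m, n)) : Prop :=
  BR1a F C /\ forall C', BR1a F C' -> (dimVstar C <= dimVstar C')%N.
Definition BR2d (C : 'M[R]_(m, n)) (F : 'M[R]_(k, n)) : Prop :=
  BR1d C F /\ forall F', BR1d C F' -> (minKer F' <= minKer F)%N.

(* A play of the game: epochs i = 1, 2, ...; Fs 0 = F0 is the initial
   feedback; Cs 0 is irrelevant. *)
Definition is_play (F0 : 'M[R]_(k, n))
    (Cs : nat -> 'M[R]_(m, n)) (Fs : nat -> 'M[R]_(k, n)) : Prop :=
  Fs 0%N = F0 /\
  forall i : nat, (1 <= i)%N ->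
    if odd i then
      [/\ BR2a (Fs i.-1) (Cs i),
          ((3 <= i)%N -> BR2a (Fs i.-1) (Cs (i - 2)%N) -> Cs i = Cs (i - 2)%N)
        & Fs i = Fs i.-1]
    else
      [/\ BR2d (Cs i.-1) (Fs i),
          (BR2d (Cs i.-1) (Fs (i - 2)%N) -> Fs i = Fs (i - 2)%N)
        & Cs i = Cs i.-1].

Definition Phi (Cs : nat -> 'M[R]_(m, n)) (Fs : nat -> 'M[R]_(k, n)) (i : nat)
  : nat :=
  if odd i then minKer (Fs i.-1) else maxKer (Cs i.-1).

End Game.

(* Main.v *)
Require Import Defs.
From HB Require Import structures.
From mathcomp Require Import all_boot all_order all_algebra.
From mathcomp Require Import boolp classical_sets reals.
Set Implicit Arguments. Unset Strict Implicit. Unset Printing Implicit Defensive.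
Import Order.TTheory GRing.Theory Num.Theory.
Section PS.
Local Open Scope ring_scope.
Lemma pow_span (F : fieldType) n (M : 'M[F]_n) p :
  exists c : 'I_n -> F, M ^+ p = \sum_(i < n) c i *: M ^+ i.
Proof.
case: n M => [|n'] M.
  by exists (fun _ => 0); rewrite big_ord0; apply/matrixP => -[].
have hd : (degree_mxminpoly M <= n'.+1)%N.
  have := dvdp_leq (monic_neq0 (char_poly_monic M)) (mxminpoly_dvd_char M).
  by rewrite size_mxminpoly size_char_poly.
have hmem : (mxvec (M ^+ p) <= powers_mx M n'.+1)%MS.
  have := horner_mx_mem M 'X^p.
  rewrite rmorphXn /= horner_mx_X => h; apply: submx_trans h _.
  apply/row_subP => i; rewrite rowK.
  by apply: (eq_row_sub (widen_ord hd i)); rewrite rowK.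
case/submxP: hmem => u hu.
exists (fun i => u 0 i).
apply: (can_inj mxvecK); rewrite hu mulmx_sum_row linear_sum.
by apply: eq_bigr => i _; rewrite rowK linearZ.
Qed.
End PS.

Section LA.
Variables (R : realType) (n m k : nat) (A : 'M[R]_n) (B : 'M[R]_(n, k)).
Local Open Scope ring_scope.

Lemma subKerP p (C : 'M[R]_(p, n)) q (X : 'M[R]_(q, n)) :
  (X <= Ker C)%MS = (C *m X^T == 0).
Proof.
rewrite /Ker sub_kermx -(inj_eq (@trmx_inj _ _ _)) trmx_mul trmxK trmx0.
by [].
Qed.

Lemma subKerOmegaP (C : 'M[R]_(m, n)) F q (X : 'M[R]_(q, n)) :
  (X <= Ker (Omega A B C F))%MS <->
  (forall i : 'I_n, C *m Acl A B F ^+ i *m X^T = 0).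
Proof.
rewrite subKerP /Omega mxcol_mul; split.
  move/eqP => h i; have := congr1 (fun M => submxcol M i) h.
  by rewrite mxcolK /= -mxcol0 mxcolK.
move=> h; apply/eqP; rewrite -mxcol0; apply/mxcolP => i.
by rewrite !mxcolK h.
Qed.

Lemma KerOmega_all (C : 'M[R]_(m, n)) F q (X : 'M[R]_(q, n)) :
  (X <= Ker (Omega A B C F))%MS ->
  forall p, C *m Acl A B F ^+ p *m X^T = 0.
Proof.
move/subKerOmegaP => h p; have [c ->] := pow_span (Acl A B F) p.
rewrite mulmx_sumr mulmx_suml big1 // => i _.
by rewrite -scalemxAr -scalemxAl h scaler0.
Qed.

Lemma KerOmega_KerC (C : 'M[R]_(m, n)) F :
  (Ker (Omega A B C F) <= Ker C)%MS.
Proof.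
rewrite subKerP; have := KerOmega_all (submx_refl (Ker (Omega A B C F))) 0.
by rewrite expr0 mulmx1 => ->.
Qed.

Lemma KerOmega_friend (C : 'M[R]_(m, n)) F :
  friend A B (Ker (Omega A B C F)) F.
Proof.
rewrite /friend /invariant_under; apply/subKerOmegaP => i.
rewrite trmx_mul trmxK mulmxA -(mulmxA C).
have -> : Acl A B F ^+ i *m Acl A B F = Acl A B F ^+ i.+1 by rewrite exprSr mulmxE.
exact: KerOmega_all (submx_refl (Ker (Omega A B C F))) _.
Qed.

Lemma inv_pow (M V : 'M[R]_n) : (V *m M^T <= V)%MS ->
  forall p, (V *m (M ^+ p)^T <= V)%MS.
Proof.
move=> h; elim=> [|p IH]; first by rewrite expr0 trmx1 mulmx1.
rewrite exprS -mulmxE trmx_mul mulmxA; apply: submx_trans h.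
exact: submxMr.
Qed.

Lemma friend_subKer (C : 'M[R]_(m, n)) F (V : 'M[R]_n) :
  (V <= Ker C)%MS -> friend A B V F -> (V <= Ker (Omega A B C F))%MS.
Proof.
move=> hC hF; apply/subKerOmegaP => i.
have := inv_pow hF i; move: hC; rewrite !subKerP => /eqP hC h.
have : (V *m (Acl A B F ^+ i)^T <= Ker C)%MS.
  by apply: submx_trans h _; rewrite subKerP hC.
by rewrite subKerP trmx_mul trmxK mulmxA => /eqP.
Qed.


Lemma ABinvP (V : 'M[R]_n) :
  ABinvariant A B V <-> (V *m A^T <= V + B^T)%MS.
Proof.
split.
  case=> F; rewrite /friend /invariant_under /Acl linearD /= trmx_mul => h.
  have -> : V *m A^T = V *m (A^T + F^T *m B^T) - (V *m F^T) *m B^T.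
    by rewrite mulmxDr mulmxA addrK.
  rewrite addmx_sub //.
    exact: submx_trans h (addsmxSl _ _).
  rewrite -mulNmx; exact: submx_trans (submxMl _ _) (addsmxSr _ _).
move=> h.
set V' := row_base V.
have eV : (V' :=: V)%MS by exact: eq_row_base.
have h' : (V' *m A^T <= V + B^T)%MS by rewrite (eqmxMr _ eV).
case/sub_addsmxP: h' => u hu.
have fV : row_full V'^T.
  by rewrite /row_full mxrank_tr; exact: row_base_free.
set G := (pinvmx V'^T)^T *m (- u.2).
exists G^T; rewrite /friend /invariant_under /Acl linearD /= trmx_mul trmxK.
rewrite -(eqmxMr _ eV) mulmxDr.
have -> : V' *m (G *m B^T) = - (u.2 *m B^T).
  rewrite mulmxA /G mulmxA.
  have -> : V' *m (pinvmx V'^T)^T = 1%:M.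
    by rewrite -[LHS]trmxK trmx_mul !trmxK mulVpmx // trmx1.
  by rewrite mul1mx mulNmx.
by rewrite hu addrK submxMl.
Qed.

Lemma ABinv0 : ABinvariant A B 0.
Proof. by exists 0; rewrite /friend /invariant_under mul0mx sub0mx. Qed.

Lemma ABinvD (V W : 'M[R]_n) : ABinvariant A B V -> ABinvariant A B W ->
  ABinvariant A B (V + W)%MS.
Proof.
move=> /ABinvP hV /ABinvP hW; apply/ABinvP.
rewrite addsmxMr addsmx_sub; apply/andP; split.
  apply: submx_trans hV _; apply: addsmxS => //; exact: addsmxSl.
apply: submx_trans hW _; apply: addsmxS => //; exact: addsmxSr.
Qed.

Lemma Vstar_ex (C : 'M[R]_(m, n)) : exists V, is_Vstar A B C V.
Proof.
pose P d := `[< exists V : 'M[R]_n, [/\ ABinvariant A B V, (V <= Ker C)%MS & \rank V = d] >].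
have P0 : exists d, P d.
  by exists 0%N; apply/asboolP; exists 0; rewrite sub0mx mxrank0; split => //; exact: ABinv0.
have Pub : forall d, P d -> (d <= n)%N.
  by move=> d /asboolP [V [_ _ <-]]; exact: rank_leq_col.
case: (ex_maxnP P0 Pub) => d /asboolP [V [hV hVC hr]] hmax.
exists V; split => // W hWC hW.
have hS : P (\rank (V + W)%MS).
  apply/asboolP; exists (V + W)%MS; split => //; first exact: ABinvD.
  by rewrite addsmx_sub hVC.
have := hmax _ hS; rewrite -hr.
move=> hle; have [_ e] := mxrank_leqif_sup (addsmxSl V W).
have hsub : (V + W <= V)%MS by rewrite -e eqn_leq hle mxrankS ?addsmxSl.
exact: submx_trans (addsmxSr V W) hsub.
Qed.



Lemma Vstar_spec (C : 'M[R]_(m, n)) : is_Vstar A B C (Vstar A B C).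
Proof. exact: xgetPex (Vstar_ex C). Qed.

Lemma kerOmega_le (C : 'M[R]_(m, n)) F : (kerOmega A B C F <= dimVstar A B C)%N.
Proof.
have [_ _ hmax] := Vstar_spec C; apply: mxrankS; apply: hmax.
  exact: KerOmega_KerC.
by exists F; exact: KerOmega_friend.
Qed.

Lemma dimVstar_le (C : 'M[R]_(m, n)) : exists F, (dimVstar A B C <= kerOmega A B C F)%N.
Proof.
have [hC [F hF] _] := Vstar_spec C; exists F; apply: mxrankS.
exact: friend_subKer.
Qed.

Lemma minKer_le F (C : 'M[R]_(m, n)) : (minKer m A B F <= kerOmega A B C F)%N.
Proof.
rewrite /minKer; case: ex_minnP => d _ hmin; apply: hmin.
by apply/asboolP; exists C.
Qed.

Lemma minKer_att F : exists C : 'M[R]_(m, n), kerOmega A B C F = minKer m A B F.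
Proof. by rewrite /minKer; case: ex_minnP => d /asboolP [C hC] _; exists C. Qed.

Lemma maxKer_eq (C : 'M[R]_(m, n)) : maxKer A B C = dimVstar A B C.
Proof.
rewrite /maxKer; case: ex_maxnP => d /asboolP [F0 hF0] hmax.
apply/eqP; rewrite eqn_leq -{1}hF0 kerOmega_le /=.
have [F hF] := dimVstar_le C; apply: leq_trans hF _; apply: hmax.
by apply/asboolP; exists F.
Qed.

End LA.
Theorem theorem1 (R : realType) (n m k : nat) (A : 'M[R]_n) (B : 'M[R]_(n, k))
    (F0 : 'M[R]_(k, n)) (Cs : nat -> 'M[R]_(m, n)) (Fs : nat -> 'M[R]_(k, n))
    (j : nat) :
  is_play A B F0 Cs Fs ->
  let l := (2 * j).+1 in
  (exists gamma : nat, forall i : nat, (l <= i)%N -> Phi A B Cs Fs i = gamma)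
  <-> dimVstar A B (Cs l) = minKer m A B (Fs l.-1).
Proof.
move=> [_ hplay] l.
have ol : odd l by rewrite /l /= mul2n odd_double.
have l1 : (1 <= l)%N by [].
set Fst := Fs l.-1; set Cst := Cs l.
have oddrule : forall i, odd i -> (1 <= i)%N -> Fs i = Fs i.-1.
  by move=> i oi i1; have := hplay i i1; rewrite oi => -[].
have hl := hplay l l1; rewrite ol in hl; case: hl => hBR2a _ hFl.
have ha : kerOmega A B Cst Fst = minKer m A B Fst.
  apply/eqP; rewrite eqn_leq minKer_le andbT.
  have [C hC] := minKer_att m A B Fst; rewrite -hC; exact: hBR2a.1.
split.
  case=> g hg; have h1 := hg l (leqnn l); have h2 := hg l.+1 (leqnSn l).
  have ol1 : odd l.+1 = false by rewrite oddS ol.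
  move: h1 h2; rewrite /Phi ol ol1 => h1 h2.
  by rewrite -maxKer_eq /Fst h1 -h2.
move=> hd; exists (minKer m A B Fst).
have hBR2d : BR2d A B Cst Fst.
  split.
    by move=> F'; rewrite ha -hd; exact: kerOmega_le.
  move=> F' hF'; apply: leq_trans (@minKer_le R n m k A B F' Cst) _.
  by rewrite -hd; exact: kerOmega_le.
have claim : forall t, Fs (l + t.*2) = Fst /\ Cs (l + t.*2) = Cst.
  elim=> [|t [hFt hCt]]; first by rewrite double0 addn0 hFl.
  set i := l + t.*2.
  have oi : odd i by rewrite /i oddD odd_double ol.
  have i1 : (1 <= i)%N by rewrite /i addSn.
  have hFi := oddrule i oi i1.
  have oe : odd i.+1 = false by rewrite oddS oi.
  have he := hplay i.+1 isT; rewrite oe in he.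
  case: he => _ hkeep hCe.
  have e2 : (i.+1 - 2 = i.-1)%N by rewrite subSS subn1.
  rewrite e2 -hFi hFt hCt in hkeep.
  have heF : Fs i.+1 = Fst by exact: hkeep.
  have oo : odd i.+2 = true by rewrite -addn2 oddD oi.
  have ho := hplay i.+2 isT; rewrite oo in ho.
  case: ho => _ hkeep2 hFo.
  have o2 : (i.+2 - 2 = i)%N by rewrite subSS subSS subn0.
  rewrite o2 /= heF hCt in hkeep2.
  rewrite doubleS !addnS -/i; split; first by rewrite hFo /= heF.
  exact: hkeep2.
move=> i hi.
have [s ->] : exists s, i = l + s by exists (i - l); rewrite subnKC.
have [t [-> | ->]] : exists t, s = t.*2 \/ s = (t.*2).+1.
  exists s./2; have := odd_double_half s.
  case: (odd s) => h; [right|left]; by rewrite -[in LHS]h.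
  have [hF hC] := claim t.
  have oi : odd (l + t.*2) by rewrite oddD odd_double ol.
  rewrite /Phi oi -oddrule // ?hF //.
have [hF hC] := claim t.
have oi : odd (l + t.*2) by rewrite oddD odd_double ol.
rewrite addnS /Phi oddS oi -[(l + t.*2).+1.-1]/(l + t.*2) hC maxKer_eq hd.
by [].
Qed.
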